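(* Let $V$ be a simple unitary vertex operator algebra, let $b\in V$ satisfy energy bounds and let $a\in V$ be a primary vector of conformal dimension $d_a\neq 1$. Then there are real numbers $B\geq 0$ and $t\geq 0$ such that $$\|a_{-m}b_m\|_n\leq B(1+|m|)^t(1+|n|)^t\big(\|a_0\|_{n-m}+\|a_0\|_n\big)$$ for all $m,n\in\mathbb{Z}$.
   Context: A simple unitary vertex operator algebra is a vertex operator algebra $V$ (over $\mathbb{C}$) of CFT type, i.e. $V=\bigoplus_{n\geq 0}V_n$ with $V_n=\ker(L_0-n1_V)$ and $V_0=\mathbb{C}\Omega$, with vacuum $\Omega$ and conformal vector $\nu$, $Y(\nu,z)=\sum_{n}L_nz^{-n-2}$, equipped with a scalar product $(\cdot|\cdot)$ with $(\Omega|\Omega)=1$ and an antilinear involution $a\mapsto a^*$ with $\nu^*=\nu$ such that $(b|a_nc)=(a^*_{-n}b|c)$ for all $a,b,c\in V$, $n\in\mathbb{Z}$. For $a\in V$ the modes $a_n$ are defined by $Y(z^{L_0}a,z)=\sum_{n}a_nz^{-n}$. A vector $a$ is primary of conformal dimension $d$ if $a\in V_d$ and $L_ka=0$ for all $k>0$. Write $\|a\|=\sqrt{(a|a)}$, $V_{\leq n}=\bigoplus_{k\leq n}V_k$ (so $V_{\leq n}=\{0\}$ for $n<0$), $\|R\|_n:=\sup\{\|Rb\|: b\in V_{\leq n},\|b\|\leq 1\}\in[0,+\infty]$. A vector $b$ satisfies energy bounds if there are real $s,C,t\geq0$ with $\|b_m\|_n\leq C(1+|m|)^t(1+|n|)^s$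 for all $m,n\in\mathbb{Z}$. *)

(* Defs.v *)
From HB Require Import structures.
From mathcomp Require Import all_boot all_order all_algebra.
From mathcomp Require Import all_classical all_reals all_analysis.
From mathcomp Require Import complex.
From Stdlib Require Import ClassicalEpsilon.

Set Implicit Arguments.
Unset Strict Implicit.
Unset Printing Implicit Defensive.

Import Order.TTheory GRing.Theory Num.Theory.
Local Open Scope ring_scope.
Local Open Scope classical_set_scope.

(* Data of a (candidate) unitary vertex operator algebra over C = R[i]:     *)
(*   Y    : Y a n c = a_(n) c, the STANDARD modes, Y(a,z) = sum a_(n)z^{-n-1}*)
(*   vac  : vacuum Omega,  nu : conformal vector                            *)
(*   sp   : scalar product (antilinear in 1st, linear in 2nd argument)      *)
(*   star : the antilinear involution a |-> a^*                             *)
(* L_n = nu_(n+1); in particular L_0 = nu_(1), L_{-1} = nu_(0).             *)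

Section VOA.
Variable R : realType.
Local Notation C := (R[i]).
Variable V : lmodType C.
Variable Y : V -> int -> V -> V.
Variables vac nu : V.

Definition Lvir (n : int) : V -> V := Y nu (n + 1).

Definition binomz (r : int) (i : nat) : C :=
  (\prod_(j < i) ((r - (j : nat)%:Z)%:~R : C)) / (i`!)%:R.

Definition gdecomp (a : V) (N : nat) (f : nat -> V) : Prop :=
  (forall j : nat, Y nu 1 (f j) = (j%:R : C) *: f j) /\ a = \sum_(j < N) f j.

(* a in V_{<= n} = \bigoplus_{k <= n} V_k (= {0} if n < 0) *)
Definition Vle (n : int) (a : V) : Prop :=
  exists N f, gdecomp a N f /\ forall j : nat, n < (j : int) -> f j = 0.

(* The modes of the paper, Y(z^{L_0} a, z) = \sum_n a_n z^{-n}: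
   for a in V_k, a_n = a_(n+k-1); extended linearly in a (the homogeneous
   decomposition is unique, so this choice is well-defined). *)
Definition pmode (a : V) (n : int) (c : V) : V :=
  epsilon (inhabits (0 : V)) (fun x => exists N f, gdecomp a N f /\
     x = \sum_(j < N) Y (f j) (n + (j : int) - 1) c).

Variable sp : V -> V -> C.
Variable star : V -> V.

Definition vnorm (x : V) : R := Num.sqrt (complex.Re (sp x x)).

Definition opnorm (T : V -> V) (n : int) : \bar R :=
  ereal_sup [set (vnorm (T b))%:E | b in [set b | Vle n b /\ vnorm b <= 1]].

Definition primary (d : nat) (a : V) : Prop :=
  Y nu 1 a = (d%:R : C) *: a /\ forall k : nat, (0 < k)%N -> Lvir k a = 0.

Definition energy_bounded (b : V) : Prop :=
  exists s Cst t : R, 0 <= s /\ 0 <= Cst /\ 0 <= t /\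
    forall m n : int,
      (opnorm (pmode b m) n <=
       (Cst * (1 + (`|m|%:~R : R)) `^ t * (1 + (`|n|%:~R : R)) `^ s)%:E)%E.

Definition is_VOA_CFT : Prop :=
  (forall a n (k : C) x y, Y a n (k *: x + y) = k *: Y a n x + Y a n y) /\
      (forall n c (k : C) a b, Y (k *: a + b) n c = k *: Y a n c + Y b n c
      ) /\
      (forall a b, exists N : int, forall n, N <= n -> Y a n b = 0
      ) /\
      (forall n c, Y vac n c = if n == -1 then c else 0
      ) /\
      (forall a, Y a (-1) vac = a /\ forall n, 0 <= n -> Y a n vac = 0
      ) /\
      (* Borcherds identity (all sums are finite by truncation) *)
      (forall a b c (p q r : int), exists N : nat, forall M : nat, (N <= M)%N ->
         \sum_(i < M) binomz p i *: Y (Y a (r + (i : nat)%:Z) b) (p + q - (i : nat)%:Z) c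
         = \sum_(i < M) ((-1) ^+ i * binomz r i) *:
              (Y a (p + r - (i : nat)%:Z) (Y b (q + (i : nat)%:Z) c)
               - (-1) ^ r *: Y b (q + r - (i : nat)%:Z) (Y a (p + (i : nat)%:Z) c))
      ) /\
      (exists cc : C, forall (m n : int) v,
         Lvir m (Lvir n v) - Lvir n (Lvir m v) =
         (m - n)%:~R *: Lvir (m + n) v
         + (if m + n == 0 then cc / 12%:R * (m ^+ 3 - m)%:~R else 0) *: v
      ) /\
      (forall a n, Y (Lvir (-1) a) n = fun c => - (n%:~R : C) *: Y a (n - 1) c
      ) /\
      (* V = \bigoplus_{n >= 0} V_n, V_n = ker (L_0 - n) *)
          (forall a, exists N f, gdecomp a N f
      ) /\
          (* each V_n is finite-dimensional *)
          (forall n : nat, exists (k : nat) (e : 'I_k -> V), forall v,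
             Y nu 1 v = (n%:R : C) *: v ->
             exists cf : 'I_k -> C, v = \sum_(i < k) cf i *: e i
      ) /\
          (forall v, Y nu 1 v = 0 -> exists k : C, v = k *: vac).

Definition is_simple : Prop :=
  forall I : V -> Prop,
    I 0 -> (forall x y, I x -> I y -> I (x + y)) ->
    (forall (k : C) x, I x -> I (k *: x)) ->
    (forall a n x, I x -> I (Y a n x)) ->
    (forall x, I x -> x = 0) \/ (forall x, I x).

Definition is_unitary : Prop :=
  (forall x y z (k : C), sp x (k *: y + z) = k * sp x y + sp x z ) /\
      (forall x y, sp y x = conjc (sp x y) ) /\
      (forall x, x != 0 -> 0 < sp x x ) /\
      sp vac vac = 1 /\
      (forall x y (k : C), star (k *: x + y) = conjc k *: star x + star y ) /\
      (forall x, star (star x) = x ) /\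
      star nu = nu /\
      (forall a b c n, sp b (pmode a n c) = sp (pmode (star a) (- n) b) c).

Definition simple_unitary_VOA : Prop :=
  [/\ is_VOA_CFT, is_simple & is_unitary].

End VOA.

(* Main.v *)
Require Import Defs.
From HB Require Import structures.
From mathcomp Require Import all_boot all_order all_algebra.
From mathcomp Require Import all_classical all_reals all_analysis.
From mathcomp Require Import complex.
From Stdlib Require Import ClassicalEpsilon.
From mathcomp Require Import ring lra.

Set Implicit Arguments.
Unset Strict Implicit.
Unset Printing Implicit Defensive.
Import Order.TTheory GRing.Theory Num.Theory.
Local Open Scope ring_scope.

Section Lin.
Variable R : realType.
Local Notation C := (R[i]).
Variable V : lmodType C.

Definition islin (f : V -> V) := forall (k : C) x y, f (k *: x + y) = k *: f x + f y.

Variable f : V -> V.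
Hypothesis Hf : islin f.

Lemma lin0 : f 0 = 0.
Proof.
have h := Hf 1 0 0; rewrite !scale1r addr0 in h.
by rewrite -[LHS](addrK (f 0)) -h subrr.
Qed.

Lemma linD x y : f (x + y) = f x + f y.
Proof. by have := Hf 1 x y; rewrite !scale1r. Qed.

Lemma linZ k x : f (k *: x) = k *: f x.
Proof. by have := Hf k x 0; rewrite !addr0 lin0 addr0. Qed.

Lemma linN x : f (- x) = - f x.
Proof. by rewrite -scaleN1r linZ scaleN1r. Qed.

Lemma linB x y : f (x - y) = f x - f y.
Proof. by rewrite linD linN. Qed.

Lemma lin_sum (I : Type) (r : seq I) (P : pred I) (g : I -> V) :
  f (\sum_(i <- r | P i) g i) = \sum_(i <- r | P i) f (g i).
Proof.
elim: r => [|x r IH]; first by rewrite !big_nil lin0.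
rewrite !big_cons; case: (P x) => //.
by rewrite linD IH.
Qed.
End Lin.

Section RealB.
Variable R : realType.
Lemma pow_split (x t : R) : 1 <= x -> 0 <= t -> forall T, t + 3 <= T ->
  x `^ t * x ^+ 3 <= x `^ T.
Proof.
move=> Hx Ht T HT.
have Hx0 : x != 0 by apply/negP => /eqP H; move: Hx; rewrite H ler10.
rewrite -powR_mulrn ?(le_trans ler01 Hx) // -powRD; last by rewrite Hx0 implybT.
by apply: ler_powR.
Qed.

Lemma real_bound (Cst t0 s c u v w : R) : 0 <= Cst -> 0 <= t0 -> 0 <= s -> 0 <= c ->
  0 <= u -> 0 <= v -> 0 <= w -> w <= u + v ->
  Cst * (1 + v) `^ t0 * (1 + u) `^ s * ((4 + c) * (w + v + 1) ^+ 3) <=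
  Cst * (4 + c) * 8 * (1 + v) `^ (t0 + s + 3) * (1 + u) `^ (t0 + s + 3).
Proof.
move=> HC Ht Hs Hc Hu Hv Hw Hwuv.
have Hx : 1 <= 1 + v by lra.
have Hy : 1 <= 1 + u by lra.
have HT1 : t0 + 3 <= t0 + s + 3 by lra.
have HT2 : s + 3 <= t0 + s + 3 by lra.
have H1 := @pow_split (1 + v) t0 Hx Ht _ HT1.
have H2 := @pow_split (1 + u) s Hy Hs _ HT2.
have Hwv : w + v + 1 <= 2 * ((1 + v) * (1 + u)) by nra.
have H3 : (w + v + 1) ^+ 3 <= 8 * ((1 + v) ^+ 3 * (1 + u) ^+ 3).
  have -> : 8 * ((1 + v) ^+ 3 * (1 + u) ^+ 3) = (2 * ((1 + v) * (1 + u))) ^+ 3.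
    by ring.
  by apply: lerXn2r; rewrite ?nnegrE //; lra.
set X := (1 + v) `^ t0; set Y := (1 + u) `^ s.
set X3 := (1 + v) ^+ 3; set Y3 := (1 + u) ^+ 3.
set XT := (1 + v) `^ (t0 + s + 3); set YT := (1 + u) `^ (t0 + s + 3).
have HX : 0 <= X by apply: powR_ge0.
have HY : 0 <= Y by apply: powR_ge0.
have HX3 : 0 <= X3 by apply: exprn_ge0; lra.
have HY3 : 0 <= Y3 by apply: exprn_ge0; lra.
have Hc4 : 0 <= Cst * (4 + c) by apply: mulr_ge0 => //; lra.
have -> : Cst * X * Y * ((4 + c) * (w + v + 1) ^+ 3) = (Cst * (4 + c)) * (X * Y) * (w + v + 1) ^+ 3 by ring.
have -> : Cst * (4 + c) * 8 * XT * YT = (Cst * (4 + c)) * (XT * YT) * 8 by ring.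
have HXY : 0 <= X * Y by apply: mulr_ge0.
have HW3 : 0 <= (w + v + 1) ^+ 3 by apply: exprn_ge0; lra.
apply: (le_trans (y := (Cst * (4 + c)) * (X * Y) * (8 * (X3 * Y3)))).
  apply: ler_pM => //; apply: mulr_ge0 => //.
have -> : Cst * (4 + c) * (X * Y) * (8 * (X3 * Y3)) = Cst * (4 + c) * ((X * X3) * (Y * Y3) * 8) by ring.
rewrite -[Cst * (4 + c) * (XT * YT) * 8]mulrA.
apply: ler_pM => //.
- by apply: mulr_ge0 => //; apply: mulr_ge0; apply: mulr_ge0.
- apply: ler_pM => //.
  + by apply: mulr_ge0; apply: mulr_ge0.
  + by apply: ler_pM => //; apply: mulr_ge0.
Qed.
End RealB.

Section VOA.
Variable R : realType.
Local Notation C := (R[i]).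
Variable V : lmodType C.
Variable Y : V -> int -> V -> V.
Variables vac nu : V.
Variable sp : V -> V -> C.
Variable star : V -> V.

Hypothesis HY3 : forall a n (k : C) x y, Y a n (k *: x + y) = k *: Y a n x + Y a n y.
Hypothesis HY1 : forall n c (k : C) a b, Y (k *: a + b) n c = k *: Y a n c + Y b n c.

Lemma Ylin a n : islin (Y a n).
Proof. by move=> k x y; apply: HY3. Qed.

Lemma Ylin1 n c : islin (fun a => Y a n c).
Proof. by move=> k x y; apply: HY1. Qed.

Definition Eig (k : int) (x : V) := Y nu 1 x = (k%:~R : C) *: x.

Lemma Eig0 k : Eig k 0.
Proof. by rewrite /Eig scaler0 (lin0 (Ylin _ _)). Qed.

Lemma EigZ k c x : Eig k x -> Eig k (c *: x).
Proof. by rewrite /Eig (linZ (Ylin _ _)) => ->; rewrite !scalerA mulrC. Qed.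

Lemma EigD k x y : Eig k x -> Eig k y -> Eig k (x + y).
Proof. by rewrite /Eig (linD (Ylin _ _)) => -> ->; rewrite scalerDr. Qed.

Lemma indep N (g : nat -> V) : (forall j : nat, Eig j (g j)) ->
  \sum_(j < N) g j = 0 -> forall j : nat, (j < N)%N -> g j = 0.
Proof.
elim: N g => [|N IH] g Hg Hs j Hj; first by [].
have H1 : \sum_(i < N) ((i%:Z - N%:Z)%:~R : C) *: g i = 0.
  have : Y nu 1 (\sum_(i < N.+1) g i) - (N%:Z%:~R : C) *: \sum_(i < N.+1) g i = 0.
    by rewrite Hs scaler0 subr0 (lin0 (Ylin _ _)).
  rewrite (lin_sum (Ylin _ _)) scaler_sumr -sumrB big_ord_recr /=.
  rewrite (Hg N) subrr addr0 => H; rewrite -[RHS]H; apply: eq_bigr => i _.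
  by rewrite (Hg i) -scalerBl rmorphB.
have Hg' : forall i : nat, Eig i (((i%:Z - N%:Z)%:~R : C) *: g i) by move=> i; apply: EigZ.
have IH' := IH _ Hg' H1.
have HlowN : forall i, (i < N)%N -> g i = 0.
  move=> i Hi; have := IH' i Hi; move/eqP; rewrite scaler_eq0 => /orP [|/eqP //].
  rewrite intr_eq0 subr_eq0 => /eqP [] Hin; by rewrite Hin ltnn in Hi.
move: Hj; rewrite ltnS leq_eqVlt => /orP [/eqP ->|]; last exact: HlowN.
move: Hs; rewrite big_ord_recr /= big1 ?add0r // => i _; exact: HlowN.
Qed.


Lemma Y0l n c : Y 0 n c = 0.
Proof. exact: (lin0 (Ylin1 n c)). Qed.

Lemma YZl n c k a : Y (k *: a) n c = k *: Y a n c.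
Proof. exact: (linZ (Ylin1 n c)). Qed.

Lemma YDl n c a b : Y (a + b) n c = Y a n c + Y b n c.
Proof. exact: (linD (Ylin1 n c)). Qed.

Lemma Ysuml n c (I : Type) (r : seq I) (P : pred I) (g : I -> V) :
  Y (\sum_(i <- r | P i) g i) n c = \sum_(i <- r | P i) Y (g i) n c.
Proof. exact: (lin_sum (Ylin1 n c)). Qed.

Hypothesis Hgd : forall a, exists N f, gdecomp Y nu a N f.

Lemma gdecomp_eig a N f : gdecomp Y nu a N f -> forall j : nat, Eig j (f j).
Proof. by case. Qed.

Lemma eig_neg (k : int) x : Eig k x -> k < 0 -> x = 0.
Proof.
move=> Hx Hk; have [N [f Hgf]] := Hgd x.
have Hf := gdecomp_eig Hgf; have Hxf := proj2 Hgf.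
pose h := fun j : nat => ((j%:Z - k)%:~R : C) *: f j.
have Hh : forall j : nat, Eig j (h j) by move=> j; apply: EigZ; exact: Hf j.
have Hs : \sum_(j < N) h j = 0.
  have : Y nu 1 x - (k%:~R : C) *: x = 0 by rewrite Hx subrr.
  rewrite Hxf (lin_sum (Ylin _ _)) scaler_sumr -sumrB => H; rewrite -[RHS]H.
  by apply: eq_bigr => j _; rewrite /h (Hf j) -scalerBl rmorphB.
rewrite Hxf big1 // => j _.
have := indep Hh Hs (ltn_ord j); move/eqP; rewrite scaler_eq0 => /orP [|/eqP //].
rewrite intr_eq0 subr_eq0 => /eqP Hjk; move: Hk; rewrite -Hjk; by [].
Qed.

Lemma eig_decomp (d : nat) a N f : Eig d a -> gdecomp Y nu a N f ->
  forall j : nat, (j < N)%N -> j != d -> f j = 0.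
Proof.
move=> Hx Hgf.
have Hf := gdecomp_eig Hgf; have Hxf := proj2 Hgf.
pose h := fun j : nat => ((j%:Z - d%:Z)%:~R : C) *: f j.
have Hh : forall j : nat, Eig j (h j) by move=> j; apply: EigZ; exact: Hf j.
have Hs : \sum_(j < N) h j = 0.
  have : Y nu 1 a - (d%:Z%:~R : C) *: a = 0 by rewrite Hx subrr.
  rewrite Hxf (lin_sum (Ylin _ _)) scaler_sumr -sumrB => H; rewrite -[RHS]H.
  by apply: eq_bigr => j _; rewrite /h (Hf j) -scalerBl rmorphB.
move=> j Hj Hjd.
have := indep Hh Hs Hj; move/eqP; rewrite scaler_eq0 => /orP [|/eqP //].
by rewrite intr_eq0 subr_eq0 => /eqP [] Hjk; rewrite Hjk eqxx in Hjd.
Qed.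

Lemma pmode_ex a n c : exists x, exists N f, gdecomp Y nu a N f /\
     x = \sum_(j < N) Y (f j) (n + (j : int) - 1) c.
Proof. have [N [f Hf]] := Hgd a; by eexists; exists N, f; split. Qed.

Lemma pmode_hom (d : nat) a n c : Eig d a -> pmode Y nu a n c = Y a (n + d%:Z - 1) c.
Proof.
move=> Ha; rewrite /pmode.
have [N [f [Hf ->]]] := epsilon_spec (inhabits (0 : V)) _ (pmode_ex a n c).
rewrite [in RHS](proj2 Hf) Ysuml; apply: eq_bigr => j _.
case: (eqVneq (val j) d) => [->//|Hjd].
by rewrite (eig_decomp Ha Hf (ltn_ord j) Hjd) !Y0l.
Qed.


Lemma P0 : Posz 0 = 0. Proof. by []. Qed.
Lemma P1 : Posz 1 = 1. Proof. by []. Qed.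

Lemma binomz0 p : binomz R p 0 = 1.
Proof. by rewrite /binomz big_ord0 /= divr1. Qed.

Lemma binomz1 p : binomz R p 1 = p%:~R.
Proof. by rewrite /binomz big_ord1 /= subr0 divr1. Qed.

Lemma binomz_1 i : (2 <= i)%N -> binomz R 1 i = 0.
Proof.
move=> Hi; rewrite /binomz (bigD1 (Ordinal Hi)) //= subrr mul0r mul0r //.
Qed.

Lemma binomz_0 i : (1 <= i)%N -> binomz R 0 i = 0.
Proof.
move=> Hi; rewrite /binomz (bigD1 (Ordinal Hi)) //= subrr mul0r mul0r //.
Qed.

Lemma sum2 (F : nat -> V) M : (2 <= M)%N -> (forall i, (2 <= i)%N -> F i = 0) ->
  \sum_(i < M) F i = F 0%N + F 1%N.
Proof.
move=> HM HF.
rewrite -(big_mkord xpredT F) (big_cat_nat (leq0n 2) HM) /=.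
rewrite big_nat_recr //= big_nat_recr //= big_geq // add0r.
rewrite [X in _ + X = _]big_nat_cond big1 ?addr0 // => i /andP[/andP[Hi _] _].
exact: HF.
Qed.

Lemma sum1 (F : nat -> V) M : (1 <= M)%N -> (forall i, (1 <= i)%N -> F i = 0) ->
  \sum_(i < M) F i = F 0%N.
Proof.
move=> HM HF.
rewrite -(big_mkord xpredT F) (big_cat_nat (leq0n 1) HM) /=.
rewrite big_nat_recr //= big_geq // add0r.
rewrite [X in _ + X = _]big_nat_cond big1 ?addr0 // => i /andP[/andP[Hi _] _].
exact: HF.
Qed.

Definition borL a b c (p q r : int) (i : nat) :=
  binomz R p i *: Y (Y a (r + i%:Z) b) (p + q - i%:Z) c.
Definition borR a b c (p q r : int) (i : nat) :=
  ((-1) ^+ i * binomz R r i) *: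
    (Y a (p + r - i%:Z) (Y b (q + i%:Z) c)
     - (-1) ^ r *: Y b (q + r - i%:Z) (Y a (p + i%:Z) c)).

Hypothesis Hbor : forall a b c (p q r : int), exists N : nat, forall M : nat, (N <= M)%N ->
         \sum_(i < M) binomz R p i *: Y (Y a (r + (i : nat)%:Z) b) (p + q - (i : nat)%:Z) c
         = \sum_(i < M) ((-1) ^+ i * binomz R r i) *:
              (Y a (p + r - (i : nat)%:Z) (Y b (q + (i : nat)%:Z) c)
               - (-1) ^ r *: Y b (q + r - (i : nat)%:Z) (Y a (p + (i : nat)%:Z) c)).

Lemma bor a b c p q r : exists N : nat, forall M : nat, (N <= M)%N ->
  \sum_(i < M) borL a b c p q r i = \sum_(i < M) borR a b c p q r i.
Proof. exact: Hbor. Qed.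

Hypothesis Hder : forall a n, Y (Lvir Y nu (-1) a) n = fun c => - (n%:~R : C) *: Y a (n - 1) c.

Lemma Yder a n c : Y (Y nu 0 a) n c = - (n%:~R : C) *: Y a (n - 1) c.
Proof. by have := Hder a n; rewrite /Lvir => ->. Qed.

Lemma L0_mode (j : nat) (k q : int) x y : Eig j x -> Eig k y ->
  Eig (k + j%:Z - q - 1) (Y x q y).
Proof.
move=> Hx Hy; have [N HN] := bor nu x y 1 q 0.
have := HN (maxn N 2) (leq_maxl _ _).
rewrite (sum2 (F := borL nu x y 1 q 0)) ?leq_maxr //; last first.
  by move=> i Hi; rewrite /borL binomz_1 // scale0r.
rewrite (sum1 (F := borR nu x y 1 q 0)) ?(leq_trans _ (leq_maxr _ _)) //; last first.
  by move=> i Hi; rewrite /borR binomz_0 // mulr0 scale0r.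
rewrite /borL /borR binomz0 binomz1 /= expr0 mul1r scale1r expr0z scale1r.
rewrite !P0 !P1 ?(add0r, addr0, subr0) mulr1z scale1r binomz0 scale1r.
rewrite Yder Hx YZl Hy (linZ (Ylin _ _)) (addrC 1 q) addrK.
set z := Y x q y => H; rewrite /Eig.
have -> : Y nu 1 z = (- ((q + 1)%:~R : C) *: z + (j%:Z%:~R : C) *: z) + (k%:~R : C) *: z.
  by rewrite H subrK.
rewrite -!scalerDl; congr (_ *: _).
rewrite !rmorphD /= !rmorphN /= rmorph1.

ring.
Qed.


Lemma comm_primary (d : nat) a (m q : int) c : Eig d a ->
  (forall k : nat, (0 < k)%N -> Lvir Y nu k a = 0) ->
  Y nu (m + 1) (Y a q c) - Y a q (Y nu (m + 1) c) =
  (((m + 1) * d%:Z - (m + 1 + q))%:~R : C) *: Y a (m + q) c.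
Proof.
move=> Ha Hp; have [N HN] := bor nu a c (m + 1) q 0.
have := HN (maxn N 2) (leq_maxl _ _).
rewrite (sum2 (F := borL nu a c (m + 1) q 0)) ?leq_maxr //; last first.
  move=> i Hi; rewrite /borL.
  have -> : Y nu (0 + i%:Z) a = 0.
    have Hi0 : (0 < i.-1)%N by case: i Hi => [|[|i]].
    have := Hp _ Hi0; rewrite /Lvir -PoszD addn1 prednK ?add0r //.
    exact: leq_trans Hi.
  by rewrite Y0l scaler0.
rewrite (sum1 (F := borR nu a c (m + 1) q 0)) ?(leq_trans _ (leq_maxr _ _)) //; last first.
  by move=> i Hi; rewrite /borR binomz_0 // mulr0 scale0r.
rewrite /borL /borR binomz0 binomz1 /= expr0 mul1r scale1r expr0z scale1r.
rewrite !P0 !P1 ?(add0r, addr0, subr0) binomz0 scale1r.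
rewrite Yder Ha YZl scalerA => <-.
rewrite (_ : m + 1 + q - 1 = m + q); last by rewrite addrAC addrK.
rewrite -scalerDl; congr (_ *: _).
rewrite !rmorphD /= !rmorphN /= !rmorphM /= !rmorphD /= rmorph1.
ring.
Qed.


Local Open Scope complex_scope.

Hypothesis Hsp_lin : forall x y z (k : C), sp x (k *: y + z) = k * sp x y + sp x z.
Hypothesis Hsp_conj : forall x y, sp y x = conjc (sp x y).
Hypothesis Hsp_pos : forall x, x != 0 -> 0 < sp x x.


Lemma sp0r x : sp x 0 = 0.
Proof.
have h := Hsp_lin x 0 0 1; rewrite scale1r addr0 mul1r in h.
by rewrite -[LHS](addrK (sp x 0)) -h subrr.
Qed.

Lemma spDr x y z : sp x (y + z) = sp x y + sp x z.
Proof. by have := Hsp_lin x y z 1; rewrite scale1r mul1r. Qed.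

Lemma spZr x y k : sp x (k *: y) = k * sp x y.
Proof. by have := Hsp_lin x y 0 k; rewrite addr0 sp0r addr0. Qed.

Lemma spNr x y : sp x (- y) = - sp x y.
Proof. by rewrite -scaleN1r spZr mulN1r. Qed.

Lemma spBr x y z : sp x (y - z) = sp x y - sp x z.
Proof. by rewrite spDr spNr. Qed.

Lemma spDl x y z : sp (x + y) z = sp x z + sp y z.
Proof. by rewrite Hsp_conj spDr rmorphD /= -!Hsp_conj. Qed.

Lemma spZl x y k : sp (k *: x) y = conjc k * sp x y.
Proof. by rewrite Hsp_conj spZr rmorphM /= -Hsp_conj. Qed.

Lemma spNl x y : sp (- x) y = - sp x y.
Proof. by rewrite Hsp_conj spNr rmorphN /= -Hsp_conj. Qed.

Lemma spBl x y z : sp (x - y) z = sp x z - sp y z.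
Proof. by rewrite spDl spNl. Qed.

Lemma sp0l x : sp 0 x = 0.
Proof. by rewrite Hsp_conj sp0r conjc0. Qed.

Lemma sp_sumr x (I : Type) (r : seq I) (P : pred I) (g : I -> V) :
  sp x (\sum_(i <- r | P i) g i) = \sum_(i <- r | P i) sp x (g i).
Proof.
elim: r => [|y r IH]; first by rewrite !big_nil sp0r.
by rewrite !big_cons; case: (P y) => //; rewrite spDr IH.
Qed.

Lemma sp_suml x (I : Type) (r : seq I) (P : pred I) (g : I -> V) :
  sp (\sum_(i <- r | P i) g i) x = \sum_(i <- r | P i) sp (g i) x.
Proof.
elim: r => [|y r IH]; first by rewrite !big_nil sp0l.
by rewrite !big_cons; case: (P y) => //; rewrite spDl IH.
Qed.

Definition sq x := complex.Re (sp x x).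

Lemma spxx x : sp x x = (sq x)%:C.
Proof.
move: (Hsp_conj x x); rewrite /sq; case: (sp x x) => a b /= [] Hb.
by congr (_ +i* _); lra.
Qed.

Lemma sq_ge0 x : 0 <= sq x.
Proof.
case: (eqVneq x 0) => [->|Hx]; first by rewrite /sq sp0r.
by have := Hsp_pos Hx; rewrite spxx ltcE /= => /andP [_ /ltW].
Qed.

Lemma sq_eq0 x : sq x = 0 -> x = 0.
Proof.
move=> H; apply/eqP; apply/negPn/negP => Hx.
by have := Hsp_pos Hx; rewrite spxx H ltcE /= ltxx andbF.
Qed.

Lemma sq0 : sq 0 = 0.
Proof. by rewrite /sq sp0r. Qed.

Lemma ReD (x y : C) : complex.Re (x + y) = complex.Re x + complex.Re y.
Proof. by case: x; case: y. Qed.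

Lemma ReN (x : C) : complex.Re (- x) = - complex.Re x.
Proof. by case: x. Qed.

Lemma ReJ (x : C) : complex.Re (conjc x) = complex.Re x.
Proof. by case: x. Qed.

Lemma ReMr (r : R) (x : C) : complex.Re (r%:C * x) = r * complex.Re x.
Proof. by case: x => a b /=; rewrite mul0r subr0. Qed.

Lemma Re_real (r : R) : complex.Re (r%:C) = r.
Proof. by []. Qed.

Lemma intC (z : int) : (z%:~R : C) = (z%:~R : R)%:C.
Proof. by rewrite rmorph_int. Qed.

Lemma sqD x y : sq (x + y) = sq x + sq y + 2 * complex.Re (sp x y).
Proof.
rewrite /sq spDl !spDr !ReD (Hsp_conj x y) ReJ; lra.
Qed.

Lemma sqZr (r : R) x : sq (r%:C *: x) = r ^+ 2 * sq x.
Proof.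
by rewrite /sq spZl spZr conjc_real mulrA -rmorphM ReMr expr2.
Qed.

Lemma sqN x : sq (- x) = sq x.
Proof. by rewrite /sq spNl spNr opprK. Qed.

Lemma ReZl (r : R) x y : complex.Re (sp (r%:C *: x) y) = r * complex.Re (sp x y).
Proof. by rewrite spZl conjc_real ReMr. Qed.

Lemma ReZr (r : R) x y : complex.Re (sp x (r%:C *: y)) = r * complex.Re (sp x y).
Proof. by rewrite spZr ReMr. Qed.


Local Notation vn := (vnorm sp).

Lemma vn_ge0 x : 0 <= vn x.
Proof. exact: sqrtr_ge0. Qed.

Lemma vn_sq x : vn x ^+ 2 = sq x.
Proof. exact: (sqr_sqrtr (sq_ge0 x)). Qed.

Lemma vn_eq0 x : vn x = 0 -> x = 0.
Proof. by move=> H; apply: sq_eq0; rewrite -vn_sq H expr2 mul0r. Qed.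

Lemma vn0 : vn 0 = 0.
Proof. by rewrite /vnorm -/(sq 0) sq0 sqrtr0. Qed.

Lemma vn_le x y : sq x <= sq y -> vn x <= vn y.
Proof. by move=> H; rewrite /vnorm ler_sqrt // sq_ge0. Qed.

Lemma vn_le_sq x (r : R) : 0 <= r -> sq x <= r ^+ 2 -> vn x <= r.
Proof.
move=> Hr H; rewrite /vnorm -(ger0_norm Hr) -sqrtr_sqr ler_sqrt //.
by rewrite sqr_ge0.
Qed.

Lemma vnZr (r : R) x : vn (r%:C *: x) = `|r| * vn x.
Proof. by rewrite /vnorm -!/(sq _) sqZr sqrtrM ?sqr_ge0 // sqrtr_sqr. Qed.

Lemma vnN x : vn (- x) = vn x.
Proof. by rewrite /vnorm -!/(sq _) sqN. Qed.

Lemma Re_le x y : complex.Re (sp x y) <= vn x * vn y.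
Proof.
set p := vn x; set q := vn y.
have Hp := vn_ge0 x; have Hq := vn_ge0 y.
case: (eqVneq p 0) => [Hp0|Hp0].
  by rewrite (vn_eq0 Hp0) sp0l Hp0 mul0r.
case: (eqVneq q 0) => [Hq0|Hq0].
  by rewrite (vn_eq0 Hq0) sp0r Hq0 mulr0.
have Hpp : 0 < p by rewrite lt_def Hp0 Hp.
have Hqq : 0 < q by rewrite lt_def Hq0 Hq.
have H := sq_ge0 (q%:C *: x + (- p)%:C *: y).
rewrite sqD !sqZr ReZl ReZr -!vn_sq -/p -/q in H.
have Hpq : 0 < p * q by apply: mulr_gt0.
nra.
Qed.

Lemma vnD x y : vn (x + y) <= vn x + vn y.
Proof.
apply: vn_le_sq; first by rewrite addr_ge0 // vn_ge0.
rewrite sqD -!vn_sq; have := Re_le x y; nra.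
Qed.

Lemma vnB x y : vn (x - y) <= vn x + vn y.
Proof. by rewrite -(vnN y); apply: vnD. Qed.

Lemma pyth M (g : nat -> V) : (forall i j : nat, i != j -> sp (g i) (g j) = 0) ->
  sq (\sum_(j < M) g j) = \sum_(j < M) sq (g j).
Proof.
move=> Hg; elim: M => [|M IH]; first by rewrite !big_ord0 sq0.
have H0 : \sum_(i < M) sp (g i) (g M) = 0.
  by apply: big1 => i _; apply: Hg; rewrite neq_ltn ltn_ord.
by rewrite !big_ord_recr /= sqD IH sp_suml H0 mulr0 addr0.
Qed.


Hypothesis Hcre : forall a, Y a (-1) vac = a /\ forall n, 0 <= n -> Y a n vac = 0.
Variable cc : C.
Hypothesis Hvir : forall (m n : int) v,
         Lvir Y nu m (Lvir Y nu n v) - Lvir Y nu n (Lvir Y nu m v) =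
         (m - n)%:~R *: Lvir Y nu (m + n) v
         + (if m + n == 0 then cc / 12%:R * (m ^+ 3 - m)%:~R else 0) *: v.
Hypothesis Hstar : star nu = nu.
Hypothesis Hadj : forall a b c n, sp b (pmode Y nu a n c) = sp (pmode Y nu (star a) (- n) b) c.
Hypothesis Hvac1 : sp vac vac = 1.

Lemma nu_eig : Eig 2 nu.
Proof.
have := Hvir 0 (-2) vac; rewrite /Lvir /=.
rewrite (_ : (0 : int) + 1 = 1) // (_ : (-2 : int) + 1 = -1) //.
rewrite (proj2 (Hcre nu) 1) // (proj1 (Hcre nu)) (lin0 (Ylin _ _)) subr0.
rewrite scale0r addr0 /Eig => ->.
by [].
Qed.

Lemma L_adj b c n : sp b (Lvir Y nu n c) = sp (Lvir Y nu (- n) b) c.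
Proof.
have := Hadj nu b c n; rewrite Hstar !(pmode_hom _ _ nu_eig).
by rewrite /Lvir -!addrA.
Qed.

Lemma L0E v : Lvir Y nu 0 v = Y nu 1 v.
Proof. by []. Qed.

Lemma orth (i j : int) x y : Eig i x -> Eig j y -> i != j -> sp x y = 0.
Proof.
move=> Hx Hy Hij.
have H1 : sp x (Lvir Y nu 0 y) = sp (Lvir Y nu (- 0) x) y by apply: L_adj.
rewrite oppr0 !L0E Hx Hy spZr spZl rmorph_int in H1.
have : ((j - i)%:~R : C) * sp x y = 0 by rewrite rmorphB mulrBl H1 subrr.
move/eqP; rewrite mulf_eq0 intr_eq0 subr_eq0 => /orP [/eqP Hji|/eqP //].
by rewrite Hji eqxx in Hij.
Qed.

Definition ccr := 2 * sq nu.

Lemma ccE : cc = ccr%:C.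
Proof.
have := Hvir 2 (-2) vac; rewrite /Lvir /=.
rewrite (_ : (-2 : int) + 1 = -1) // (_ : (2 : int) + 1 = 3) //.
rewrite (proj2 (Hcre nu) 3) // (proj2 (Hcre nu) 1) // (proj1 (Hcre nu)).
rewrite !(lin0 (Ylin _ _)) subr0 scaler0 add0r => H.
have H2 : sp nu nu = cc / 12%:R * ((2 : int) ^+ 3 - 2)%:~R.
  have := L_adj vac nu 2; rewrite /Lvir (_ : (2 : int) + 1 = 3) // H spZr Hvac1 mulr1.
  by rewrite (_ : - (2 : int) + 1 = -1) // (proj1 (Hcre nu)) => ->.
rewrite /ccr rmorphM /= -spxx H2.
rewrite (_ : ((2 : int) ^+ 3 - 2)%:~R = 6%:R :> C) //.
field.
by [].
Qed.

Lemma ccr_ge0 : 0 <= ccr.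
Proof. by rewrite /ccr mulr_ge0 // sq_ge0. Qed.


Definition alpha (k m : nat) : R := 2 * m%:R * k%:R + ccr / 12%:R * (m%:R ^+ 3 - m%:R).

Lemma natC (n : nat) : ((n%:R : R)%:C : C) = n%:R.
Proof. by rewrite rmorph_nat. Qed.

Lemma intC' (n : int) : ((n%:~R : R)%:C : C) = n%:~R.
Proof. by rewrite rmorph_int. Qed.

Lemma realC_coef (z : int) : (ccr / 12%:R * z%:~R)%:C = cc / 12%:R * (z%:~R : C).
Proof. by rewrite ccE -natC -intC' -fmorphV -!rmorphM. Qed.

Lemma V1 (k m : nat) v : Eig k v ->
  sq (Lvir Y nu (- m%:Z) v) = sq (Lvir Y nu m v) + alpha k m * sq v.
Proof.
move=> Hv.
have H := Hvir m (- m%:Z) v.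
rewrite subrr in H.
rewrite eqxx in H.
have E : Lvir Y nu m (Lvir Y nu (- m%:Z) v) =
   (m%:Z - - m%:Z)%:~R *: Lvir Y nu 0 v + (cc / 12%:R * ((m%:Z) ^+ 3 - m%:Z)%:~R) *: v
   + Lvir Y nu (- m%:Z) (Lvir Y nu m v) by rewrite -H subrK.
rewrite /sq -L_adj E !spDr -(opprK (m%:Z)) L_adj opprK.
rewrite L0E Hv !spZr -realC_coef spxx !intC !ReD !ReMr !Re_real opprK.
rewrite /alpha.
rewrite ?rmorphD ?rmorphB /= ?rmorphXn /= ?rmorphN /=.
rewrite -[((m%:Z)%:~R : R)]/(m%:R) -[((k%:Z)%:~R : R)]/(k%:R).
ring.
Qed.


Lemma Lmode_eig (k n : int) v : Eig k v -> Eig (k - n) (Lvir Y nu n v).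
Proof.
move=> Hv; have := L0_mode (n + 1) nu_eig Hv.
by rewrite /Lvir (_ : k + (2%N : int) - (n + 1) - 1 = k - n) //; ring.
Qed.

Definition P (k m : nat) : R := 3 * (k%:R + 1) ^+ 2 + ccr * (k%:R + 1) * m%:R ^+ 2.

Lemma P_ge0 k m : 0 <= P k m.
Proof.
have Hc := ccr_ge0; have Hk : (0:R) <= k%:R by [].
have Hm : (0:R) <= m%:R by [].
have H1 : 0 <= ccr * (k%:R + 1) by rewrite mulr_ge0 // addr_ge0.
rewrite /P; nra.
Qed.

Lemma sq_step (s a b g Pk : R) : 0 <= s -> 0 <= a -> 0 <= b -> 0 <= g ->
  s <= a * b -> b ^+ 2 <= g * s -> g <= Pk -> s <= Pk * a ^+ 2.
Proof.
move=> Hs Ha Hb Hg H1 H2 H3.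
case: (eqVneq s 0) => [->|Hs0].
  by apply: mulr_ge0; [exact: le_trans Hg H3 | exact: exprn_ge0].
have Hsp : 0 < s by rewrite lt_def Hs0 Hs.
have H4 : s * s <= (a ^+ 2 * g) * s.
  have : s * s <= (a * b) ^+ 2 by rewrite expr2 ler_pM //.
  move/le_trans; apply; rewrite exprMn -mulrA ler_wpM2l // exprn_ge0 //.
have H5 : s <= a ^+ 2 * g by rewrite -(ler_pM2r Hsp).
apply: (le_trans H5); rewrite mulrC ler_wpM2r // exprn_ge0 //.
Qed.

Lemma P_step (k m : nat) : (0 < m)%N -> P k m + alpha k m <= P (k + m) m.
Proof.
move=> Hm; rewrite /P /alpha natrD.
have Hc := ccr_ge0.
have Hk : 0 <= k%:R :> R by [].
have Hm1 : 1 <= m%:R :> R by rewrite ler1n.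
set x := k%:R; set y := m%:R.
have Hy0 : 0 <= y by apply: le_trans Hm1.
have H1 : 0 <= ccr * (y ^+ 3) := mulr_ge0 Hc (exprn_ge0 3 Hy0).
have H2 : 0 <= ccr * y := mulr_ge0 Hc Hy0.
have H3 : 0 <= ccr * y ^+ 2 * x := mulr_ge0 (mulr_ge0 Hc (exprn_ge0 2 Hy0)) Hk.
nra.
Qed.

Lemma V2 (k : nat) v : Eig k v -> forall m : nat, (0 < m)%N ->
  sq (Lvir Y nu m v) <= P k m * sq v.
Proof.
elim/ltn_ind: k v => k IH v Hv m Hm.
have Hw := Lmode_eig m Hv.
set w := Lvir Y nu m v in Hw *.
case: (ltnP k m) => Hkm.
  rewrite (eig_neg Hw); first by rewrite sq0 mulr_ge0 ?P_ge0 ?sq_ge0.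
  by rewrite subr_lt0 ltz_nat.
set k' := (k - m)%N.
have Hk' : k = (k' + m)%N by rewrite subnK.
have Hw' : Eig k' w by rewrite /k' -subzn.
have Hlt : (k' < k)%N by rewrite /k' ltn_subrL Hm (leq_trans Hm Hkm).
have IH' := IH k' Hlt w Hw' m Hm.
have Hv1 := V1 m Hw'.
have Hsw : sq w <= vn v * vn (Lvir Y nu (- m%:Z) w).
  rewrite {1}/sq {1}/w -[m%:Z]opprK -L_adj opprK; exact: Re_le.
rewrite -[sq v]vn_sq.
apply: (sq_step (g := P k' m + alpha k' m) (b := vn (Lvir Y nu (- m%:Z) w))).
- exact: sq_ge0.
- exact: vn_ge0.
- exact: vn_ge0.
- apply: (le_trans (P_ge0 k' m)); rewrite lerDl /alpha.
  have Hc := ccr_ge0; have Hm1 : 1 <= m%:R :> R by rewrite ler1n.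
  have Hk : 0 <= k'%:R :> R by [].
  have H1 : 0 <= ccr * (m%:R ^+ 3 - m%:R).
    by apply: mulr_ge0 => //; nra.
  nra.
- exact: Hsw.
- by rewrite vn_sq Hv1 [X in _ <= X]mulrDl; apply: lerD.
- by rewrite Hk'; apply: P_step.
Qed.



Definition Q (k m : nat) : R := (4 + ccr) * (k%:R + m%:R + 1) ^+ 3.

Lemma Q_ineqs (x y : R) : 0 <= x -> 0 <= y ->
  [/\ 3 * (x + 1) ^+ 2 + ccr * (x + 1) * y ^+ 2 <= (4 + ccr) * (x + y + 1) ^+ 3,
      3 * (x + 1) ^+ 2 + ccr * (x + 1) * y ^+ 2 + (2 * y * x + ccr / 12%:R * (y ^+ 3 - y))
        <= (4 + ccr) * (x + y + 1) ^+ 3 &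
      x ^+ 2 <= (4 + ccr) * (x + 0 + 1) ^+ 3].
Proof.
move=> Hx Hy; have Hc := ccr_ge0.
set X := x + y + 1.
have HX1 : 1 <= X by rewrite /X; lra.
have HX0 : 0 <= X by lra.
have HX2 : X ^+ 2 <= X ^+ 3.
  have : 0 <= X ^+ 2 * (X - 1) by rewrite mulr_ge0 ?exprn_ge0 // subr_ge0.
  have -> : X ^+ 3 = X ^+ 2 * X by rewrite exprSr.
  nra.
have A : (x + 1) ^+ 2 + 2 * x * y <= X ^+ 2 by rewrite /X; nra.
have B : (x + 1) * y ^+ 2 + y ^+ 3 <= X ^+ 3.
  have -> : (x + 1) * y ^+ 2 + y ^+ 3 = X * y ^+ 2 by rewrite /X; ring.
  have -> : X ^+ 3 = X * X ^+ 2 by rewrite exprS.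
  rewrite ler_wpM2l //; have : y <= X by rewrite /X; lra.
  by move=> Hyx; rewrite ler_pXn2r ?nnegrE.
have cB : ccr * ((x + 1) * y ^+ 2 + y ^+ 3) <= ccr * X ^+ 3 by rewrite ler_wpM2l.
have cy3 : 0 <= ccr * y ^+ 3 by rewrite mulr_ge0 // exprn_ge0.
have cy : 0 <= ccr * y by rewrite mulr_ge0.
have X3 : 0 <= X ^+ 3 by rewrite exprn_ge0.
have cxy : 0 <= ccr * (x + 1) * y ^+ 2 :=
  mulr_ge0 (mulr_ge0 Hc (addr_ge0 Hx ler01)) (exprn_ge0 2 Hy).
split.
- nra.
- nra.
- set Z := x + 0 + 1.
  have HZ : 1 <= Z by rewrite /Z; lra.
  have HZ0 : 0 <= Z by lra.
  have H1 : x ^+ 2 <= Z ^+ 2 by rewrite /Z; nra.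
  have H2 : Z ^+ 2 <= Z ^+ 3.
    have : 0 <= Z ^+ 2 * (Z - 1) by rewrite mulr_ge0 ?exprn_ge0 // subr_ge0.
    have -> : Z ^+ 3 = Z ^+ 2 * Z by rewrite exprSr.
    nra.
  have H3 : 0 <= ccr * Z ^+ 3 := mulr_ge0 Hc (exprn_ge0 3 HZ0).
  nra.
Qed.

Lemma V3 (k : nat) v (m : int) : Eig k v -> sq (Lvir Y nu m v) <= Q k `|m|%N * sq v.
Proof.
move=> Hv; have Hx : 0 <= k%:R :> R by [].
case: m => [mu|n].
  case: mu => [|mu].
    rewrite L0E Hv intC sqZr /Q /=.
    have [_ _ H] := Q_ineqs Hx (@ler01 R).
    rewrite ler_wpM2r ?sq_ge0 //.
  apply: (le_trans (V2 Hv (ltn0Sn mu))); rewrite ler_wpM2r ?sq_ge0 //.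
  by have [H _ _] := Q_ineqs Hx (ler0n R mu.+1); rewrite /P /Q.
rewrite NegzE (V1 _ Hv).
apply: (le_trans (y := (P k n.+1 + alpha k n.+1) * sq v)).
  rewrite [X in _ <= X]mulrDl; apply: lerD => //; exact: V2.
rewrite ler_wpM2r ?sq_ge0 //.
by have [_ H _] := Q_ineqs Hx (ler0n R n.+1); rewrite /P /Q /alpha.
Qed.


Lemma Lvir_sum m (I : Type) (r : seq I) (P : pred I) (g : I -> V) :
  Lvir Y nu m (\sum_(i <- r | P i) g i) = \sum_(i <- r | P i) Lvir Y nu m (g i).
Proof. exact: (lin_sum (Ylin _ _)). Qed.

Lemma Q_ge1 k m : 1 <= Q k m.
Proof.
rewrite /Q; have Hc := ccr_ge0.
have HX : 1 <= k%:R + m%:R + 1 :> R.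
  by rewrite lerDr addr_ge0.
have H3 : 1 <= (k%:R + m%:R + 1) ^+ 3 :> R by rewrite exprn_ege1.
nra.
Qed.

Lemma Q_mono k k' m : (k <= k')%N -> Q k m <= Q k' m.
Proof.
move=> Hk; rewrite /Q ler_wpM2l ?addr_ge0 ?ccr_ge0 //.
rewrite lerXn2r ?nnegrE ?addr_ge0 //.
by rewrite !lerD2r ler_nat.
Qed.

Lemma V4 (N : int) u (m : int) : Vle Y nu N u ->
  sq (Lvir Y nu m u) <= Q `|N|%N `|m|%N * sq u.
Proof.
move=> [M [f [[Hf Hu] Hz]]].
have Hfe : forall j : nat, Eig j (f j) := Hf.
have Horth : forall i j : nat, i != j -> sp (f i) (f j) = 0.
  by move=> i j Hij; apply: orth (Hfe i) (Hfe j) _.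
rewrite Hu Lvir_sum (pyth _ Horth) (@pyth M (fun j => Lvir Y nu m (f j))); last first.
  move=> i j Hij /=; apply: orth (Lmode_eig m (Hfe i)) (Lmode_eig m (Hfe j)) _.
  by rewrite (inj_eq (addIr _)).
rewrite mulr_sumr; apply: ler_sum => j _.
case: (lerP (Posz j) N) => HjN.
  apply: le_trans (V3 m (Hfe j)) _; rewrite ler_wpM2r ?sq_ge0 //.
  apply: Q_mono; rewrite -lez_nat; apply: le_trans HjN _.
  by rewrite abszE ler_norm.
by rewrite (Hz j HjN) /Lvir (lin0 (Ylin _ _)) sq0 mulr0.
Qed.

Lemma Lbound (N : int) u (m : int) : Vle Y nu N u ->
  vn (Lvir Y nu m u) <= Q `|N|%N `|m|%N * vn u.
Proof.
move=> Hu; apply: vn_le_sq; first by rewrite mulr_ge0 ?vn_ge0 // (le_trans ler01 (Q_ge1 _ _)).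
apply: (le_trans (V4 m Hu)).
have H1 := Q_ge1 `|N|%N `|m|%N; have H2 := sq_ge0 u.
have H3 : 0 <= Q `|N|%N `|m|%N * sq u by rewrite mulr_ge0 // (le_trans ler01 H1).
rewrite exprMn vn_sq; nra.
Qed.


Lemma comp_zero M (h : nat -> V) (e : nat -> int) : forall M' (g : nat -> V),
  (forall i : nat, Eig i (g i)) -> (forall j, Eig (e j) (h j)) ->
  \sum_(i < M') g i = \sum_(j < M) h j ->
  forall i : nat, (i < M')%N -> (forall j, (j < M)%N -> e j = i -> h j = 0) -> g i = 0.
Proof.
elim: M h e => [|M IH] h e M' g Hg Hh Hs i Hi Hc.
  by apply: indep Hg _ _ Hi; rewrite Hs big_ord0.
case: (eqVneq (e M) (Posz i)) => [HeM|HeM].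
  have HhM : h M = 0 by apply: Hc.
  apply: (IH h e M' g Hg Hh _ i Hi) => //.
    by rewrite Hs big_ord_recr /= HhM addr0.
  by move=> j Hj; apply: Hc; apply: ltnW.
pose g' := fun i : nat => ((i%:Z - e M)%:~R : C) *: g i.
pose h' := fun j : nat => ((e j - e M)%:~R : C) *: h j.
have Hg' : forall i : nat, Eig i (g' i) by move=> k; apply: EigZ.
have Hh' : forall j, Eig (e j) (h' j) by move=> k; apply: EigZ.
have Hs' : \sum_(k < M') g' k = \sum_(j < M) h' j.
  have : Y nu 1 (\sum_(k < M') g k) - ((e M)%:~R : C) *: \sum_(k < M') g k =
         Y nu 1 (\sum_(j < M.+1) h j) - ((e M)%:~R : C) *: \sum_(j < M.+1) h j.
    by rewrite Hs.
  rewrite !(lin_sum (Ylin _ _)) !scaler_sumr -!sumrB big_ord_recr /= (Hh M) subrr addr0.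
  move=> H; rewrite /g' /h'.
  under eq_bigr => k _ do rewrite rmorphB scalerBl -(Hg k).
  rewrite H; apply: eq_bigr => j _.
  by rewrite rmorphB scalerBl -(Hh j).
have := IH h' e M' g' Hg' Hh' Hs' i Hi.
have Hc' : forall j, (j < M)%N -> e j = i -> h' j = 0.
  by move=> j Hj Hej; rewrite /h' Hc ?scaler0 //; apply: ltnW.
move=> /(_ Hc') /eqP; rewrite scaler_eq0 intr_eq0 subr_eq0 eq_sym (negbTE HeM) /=.
by move/eqP.
Qed.

Lemma VleI (N : int) x M (h : nat -> V) (e : nat -> int) :
  (forall j, Eig (e j) (h j)) -> (forall j, (j < M)%N -> N < e j -> h j = 0) ->
  x = \sum_(j < M) h j -> Vle Y nu N x.
Proof.
move=> Hh Hz Hx.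
have [M' [g [Hg Hxg]]] := Hgd x.
exists M', (fun i : nat => if (i < M')%N then g i else 0); split.
  split.
    move=> j /=; case: ifP => _; first exact: Hg.
    by rewrite (lin0 (Ylin _ _)) scaler0.
  by rewrite Hxg; apply: eq_bigr => i _; rewrite ltn_ord.
move=> i Hi /=; case: ifP => // HiM.
apply: (comp_zero (h := h) (e := e) (M := M) (M' := M') (gdecomp_eig (conj Hg Hxg))) => //.
  by rewrite -Hxg.
move=> j Hj Hej; apply: Hz => //; by rewrite Hej.
Qed.

Lemma Vle0 N : Vle Y nu N 0.
Proof. by apply: (VleI (M := 0) (h := fun _ => 0) (e := fun _ => 0)); rewrite ?big_ord0 //; move=> j; apply: Eig0. Qed.

Lemma Vle_map (T : V -> V) (s : int) N u : islin T ->
  (forall (j : int) x, Eig j x -> Eig (j - s) (T x)) -> Vle Y nu N u -> Vle Y nu (N - s) (T u).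
Proof.
move=> HT HE [M [f [[Hf Hu] Hz]]].
apply: (VleI (M := M) (h := fun j => T (f j)) (e := fun j : nat => j%:Z - s)).
- by move=> j; apply: HE; apply: Hf.
- move=> j Hj Hlt; rewrite Hz ?(lin0 HT) //.
  by move: Hlt; rewrite ltrD2r.
- by rewrite Hu (lin_sum HT).
Qed.

Lemma Vle_add N u v : Vle Y nu N u -> Vle Y nu N v -> Vle Y nu N (u + v).
Proof.
move=> [M1 [f [[Hf Hu] Hzf]]] [M2 [g [[Hg Hv] Hzg]]].
apply: (VleI (M := M1 + M2) (h := fun j => if (j < M1)%N then f j else g (j - M1)%N)
          (e := fun j : nat => if (j < M1)%N then Posz j else Posz (j - M1)%N)).
- by move=> j; case: ifP => _; [apply: Hf | apply: Hg].
- move=> j _; case: ifP => _ H; [exact: Hzf | exact: Hzg].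
- rewrite big_split_ord /= Hu Hv; congr (_ + _); apply: eq_bigr => i _ /=.
    by rewrite ltn_ord.
  by rewrite ltnNge leq_addr /= addKn.
Qed.

Lemma Vle_sum N M (F : nat -> V) : (forall j, (j < M)%N -> Vle Y nu N (F j)) ->
  Vle Y nu N (\sum_(j < M) F j).
Proof.
elim: M => [|M IH] H; first by rewrite big_ord0; apply: Vle0.
rewrite big_ord_recr /=; apply: Vle_add.
  by apply: IH => j Hj; apply: H; apply: ltnW.
exact: H.
Qed.

Lemma Vle_scale N (c : C) u : Vle Y nu N u -> Vle Y nu N (c *: u).
Proof.
move=> Hu; have := Vle_map (T := fun x => c *: x) (s := 0) _ _ Hu.
rewrite subr0; apply.
  by move=> k x y; rewrite scalerDr !scalerA mulrC.
by move=> j x Hx; rewrite subr0; apply: EigZ.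
Qed.


Lemma Vle_pmode b n m c : Vle Y nu n c -> Vle Y nu (n - m) (pmode Y nu b m c).
Proof.
move=> Hc; rewrite /pmode.
have [N [f [Hf ->]]] := epsilon_spec (inhabits (0 : V)) _ (pmode_ex b m c).
apply: (Vle_sum (F := fun j : nat => Y (f j) (m + j%:Z - 1) c)) => j _.
apply: Vle_map (Ylin _ _) _ Hc => k x Hx.
have := L0_mode (m + j%:Z - 1) (gdecomp_eig Hf j) Hx.
by rewrite (_ : k + j%:Z - (m + j%:Z - 1) - 1 = k - m) //; ring.
Qed.

Lemma Vle_Y0 (d : nat) a n c : Eig d a -> Vle Y nu n c -> Vle Y nu n (Y a (0 + d%:Z - 1) c).
Proof.
move=> Ha Hc; have := Vle_map (s := 0) (Ylin a (0 + d%:Z - 1)) _ Hc.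
rewrite subr0; apply => k x Hx; have := L0_mode (0 + d%:Z - 1) Ha Hx.
by rewrite (_ : k + d%:Z - (0 + d%:Z - 1) - 1 = k - 0) //; ring.
Qed.

Lemma Vle_L N m u : Vle Y nu N u -> Vle Y nu (N + m) (Lvir Y nu (- m) u).
Proof.
move=> Hu; have := Vle_map (s := - m) (Ylin nu (- m + 1)) _ Hu.
rewrite opprK; apply => k x Hx; have := Lmode_eig (- m) Hx; by rewrite opprK.
Qed.

Local Open Scope ereal_scope.

Lemma opnorm_ub T n b : Vle Y nu n b -> (vn b <= 1)%R ->
  (vn (T b))%:E <= opnorm Y nu sp T n.
Proof. by move=> Hb Hb1; apply: ereal_sup_ubound; exists b. Qed.

Lemma opnorm_le T n (M : \bar R) :
  (forall b, Vle Y nu n b -> (vn b <= 1)%R -> (vn (T b))%:E <= M) ->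
  opnorm Y nu sp T n <= M.
Proof. by move=> H; apply: ge_ereal_sup => _ [b [Hb Hb1] <-]; exact: H. Qed.

Lemma opnorm_ge0 T n : T 0%R = 0%R -> 0 <= opnorm Y nu sp T n.
Proof.
move=> H0; have := @opnorm_ub T n 0 (Vle0 n); rewrite H0 vn0; apply.
exact: ler01.
Qed.

Lemma opnorm_bound T n u : islin T -> Vle Y nu n u ->
  (vn (T u))%:E <= opnorm Y nu sp T n * (vn u)%:E.
Proof.
move=> HT Hu; case: (eqVneq (vn u) 0%R) => [H0|H0].
  by rewrite (vn_eq0 H0) (lin0 HT) vn0 mule0.
set r := vn u.
have Hr : (0 < r)%R by rewrite lt_def H0 vn_ge0.
set u' := (r^-1)%:C *: u.
have Hu' : Vle Y nu n u' by apply: Vle_scale.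
have Hn : vn u' = 1%R.
  by rewrite /u' vnZr ger0_norm ?invr_ge0 ?vn_ge0 // mulVf.
have HTu : T u = r%:C *: T u'.
  rewrite -(linZ HT) /u' scalerA -rmorphM /= mulfV //.
  by rewrite (_ : (1%R : R)%:C = 1%R) // scale1r.
rewrite HTu vnZr ger0_norm ?vn_ge0 // EFinM muleC.
apply: lee_wpmul2r; first by rewrite lee_fin vn_ge0.
by apply: opnorm_ub; rewrite ?Hn.
Qed.


Lemma int_norm_ge1 (z : int) : z != 0%R -> (1 <= `|(z%:~R : R)|)%R.
Proof. move=> Hz. rewrite -intr_norm ler1z. by rewrite -gtz0_ge1 normr_gt0. Qed.

Lemma main_est (d : nat) a b (Ha : Eig d a)
  (Hp : forall k : nat, (0 < k)%N -> Lvir Y nu k a = 0%R) (Hd : d <> 1%N)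
  (E : int -> int -> R) (HE0 : forall m n, (0 <= E m n)%R)
  (Hb : forall m n, opnorm Y nu sp (pmode Y nu b m) n <= (E m n)%:E) (m n : int) :
  opnorm Y nu sp (fun c => pmode Y nu a (- m) (pmode Y nu b m c)) n <=
  (E m n * Q `|n - m|%N `|m|%N)%:E *
  (opnorm Y nu sp (pmode Y nu a 0) (n - m) + opnorm Y nu sp (pmode Y nu a 0) n).
Proof.
set K := Q `|n - m|%N `|m|%N.
set A1 := opnorm Y nu sp (pmode Y nu a 0) (n - m).
set A2 := opnorm Y nu sp (pmode Y nu a 0) n.
set q := (0 + d%:Z - 1)%R.
have Ha0 : forall c, pmode Y nu a 0 c = Y a q c by move=> c; rewrite (pmode_hom _ _ Ha).
have a0lin : islin (pmode Y nu a 0).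
  by move=> k x y; rewrite !Ha0 HY3.
have HK1 : (1 <= K)%R := Q_ge1 _ _.
have HK0 : (0 <= K)%R := le_trans ler01 HK1.
have HA1 : 0 <= A1 by apply: opnorm_ge0; rewrite (lin0 a0lin).
have HA2 : 0 <= A2 by apply: opnorm_ge0; rewrite (lin0 a0lin).
have HE := HE0 m n.
have HEK0 : (0 <= E m n * K)%R by rewrite mulr_ge0.
have HEK : (E m n <= E m n * K)%R.
  by rewrite -{1}(mulr1 (E m n)) ler_wpM2l.
apply: opnorm_le => c Hc Hc1.
set w := pmode Y nu b m c.
have Hw : Vle Y nu (n - m) w := Vle_pmode b m Hc.
have HwE : (vn w <= E m n)%R.
  by have := le_trans (opnorm_ub (pmode Y nu b m) Hc Hc1) (Hb m n); rewrite lee_fin.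
have Hw0 := vn_ge0 w.
case: (eqVneq m 0%R) => [Hm0|Hm0].
  have Hw' : Vle Y nu n w by move: Hw; rewrite Hm0 subr0.
  have -> : pmode Y nu a (- m) w = pmode Y nu a 0 w by rewrite Hm0 oppr0.
  apply: le_trans (opnorm_bound a0lin Hw') _.
  apply: (le_trans (y := A2 * (E m n * K)%:E)).
    by apply: lee_wpmul2l => //; rewrite lee_fin (le_trans HwE HEK).
  rewrite muleC; apply: lee_wpmul2l; first by rewrite lee_fin.
  by apply: lee_paddl.
set z : int := ((- m + 1) * d%:Z - (- m + 1 + q))%R.
have Hz : z != 0%R.
  rewrite /z /q (_ : ((- m + 1) * d%:Z - (- m + 1 + (0 + d%:Z - 1)) = m * (1 - d%:Z))%R); last by ring.
  rewrite mulf_eq0 negb_or Hm0 /= subr_eq0 eq_sym.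
  by apply/negP => /eqP [] Hd1; apply: Hd.
have Hcomm := comm_primary (- m) q w Ha Hp.
set aw := pmode Y nu a (- m) w.
have Haw : aw = Y a (- m + q) w.
  by rewrite /aw (pmode_hom _ _ Ha) /q; congr (Y a _ w); ring.
set a0w := Y a q w.
set Lw := Lvir Y nu (- m) w.
have Ha0w' : Vle Y nu (n - m) a0w by apply: (Vle_Y0 Ha).
have HLw : Vle Y nu n Lw by have := Vle_L m Hw; rewrite subrK.
have Hdiff : (vn aw <= vn (Lvir Y nu (- m) a0w) + vn (Y a q Lw))%R.
  have Heq : (Lvir Y nu (- m) a0w - Y a q Lw = (z%:~R : C) *: aw)%R by rewrite Haw -Hcomm.
  have := vnB (Lvir Y nu (- m) a0w) (Y a q Lw); rewrite Heq intC vnZr.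
  apply: le_trans; rewrite -{1}(mul1r (vn aw)) ler_wpM2r ?vn_ge0 //.
  exact: int_norm_ge1.
have HL1 : (vn (Lvir Y nu (- m) a0w) <= K * vn a0w)%R.
  by have := Lbound (- m) Ha0w'; rewrite abszN.
have HL2 : (vn Lw <= K * vn w)%R.
  by have := Lbound (- m) Hw; rewrite abszN.
have h1 : (vn (Lvir Y nu (- m) a0w))%:E <= (E m n * K)%:E * A1.
  apply: (le_trans (y := K%:E * (A1 * (vn w)%:E))).
    apply: (le_trans (y := (K * vn a0w)%:E)); first by rewrite lee_fin.
    rewrite EFinM; apply: lee_wpmul2l; first by rewrite lee_fin.
    by have := opnorm_bound a0lin Hw; rewrite Ha0.
  apply: (le_trans (y := K%:E * (A1 * (E m n)%:E))).
    by apply: lee_wpmul2l; rewrite ?lee_fin //; apply: lee_wpmul2l; rewrite ?lee_fin.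
  have -> : (E m n * K)%:E * A1 = K%:E * (A1 * (E m n)%:E).
    by rewrite [(E m n * K)%:E]EFinM (muleC (E m n)%:E) -muleA (muleC A1).
  by [].
have h2 : (vn (Y a q Lw))%:E <= (E m n * K)%:E * A2.
  apply: (le_trans (y := A2 * (vn Lw)%:E)).
    by have := opnorm_bound a0lin HLw; rewrite Ha0.
  rewrite muleC; apply: lee_wpmul2r => //; rewrite lee_fin.
  apply: le_trans HL2 _; rewrite mulrC ler_wpM2r //.
rewrite ge0_muleDr //.
apply: le_trans (leeD h1 h2); rewrite -EFinD lee_fin //.
Qed.


Lemma final_est (d : nat) a b (Ha : Eig d a)
  (Hp : forall k : nat, (0 < k)%N -> Lvir Y nu k a = 0%R) (Hd : d <> 1%N)
  (Hb : energy_bounded Y nu sp b) :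
  exists B t : R, (0 <= B)%R /\ (0 <= t)%R /\
    forall m n : int,
      (opnorm Y nu sp (fun c => pmode Y nu a (- m) (pmode Y nu b m c)) n <=
       (B * (1 + (`|m|%:~R : R)) `^ t * (1 + (`|n|%:~R : R)) `^ t)%:E *
       (opnorm Y nu sp (pmode Y nu a 0) (n - m) + opnorm Y nu sp (pmode Y nu a 0) n)).
Proof.
move: Hb => [s [Cst [t0 [Hs [HC [Ht Hbnd]]]]]].
pose E := fun m n : int => (Cst * (1 + (`|m|%:~R : R)) `^ t0 * (1 + (`|n|%:~R : R)) `^ s)%R.
have HE0 : forall m n, (0 <= E m n)%R.
  by move=> m n; rewrite /E !mulr_ge0 // powR_ge0.
have Hc := ccr_ge0.
exists (Cst * (4 + ccr) * 8)%R, (t0 + s + 3)%R.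
split; first by rewrite !mulr_ge0 //; lra.
split; first by lra.
move=> m n.
apply: le_trans (main_est Ha Hp Hd HE0 Hbnd m n) _.
have Ha0 : forall c, pmode Y nu a 0 c = Y a (0 + d%:Z - 1) c by move=> c; rewrite (pmode_hom _ _ Ha).
apply: lee_wpmul2r.
  by apply: adde_ge0; apply: opnorm_ge0; rewrite Ha0 (lin0 (Ylin _ _)).
rewrite lee_fin /E /Q !natr_absz.
apply: real_bound => //.
by rewrite -rmorphD /= ler_int ler_normB.
Qed.

End VOA.

Theorem mainTheorem9 (R : realType) (V : lmodType R[i])
  (Y : V -> int -> V -> V) (vac nu : V) (sp : V -> V -> R[i]) (star : V -> V)
  (HV : simple_unitary_VOA Y vac nu sp star)
  (a b : V) (d : nat)
  (Hb : energy_bounded Y nu sp b)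
  (Ha : primary Y nu d a) (Hd : d <> 1%N) :
  exists B t : R, 0 <= B /\ 0 <= t /\
    forall m n : int,
      (opnorm Y nu sp (fun c => pmode Y nu a (- m) (pmode Y nu b m c)) n <=
       (B * (1 + (`|m|%:~R : R)) `^ t * (1 + (`|n|%:~R : R)) `^ t)%:E *
       (opnorm Y nu sp (pmode Y nu a 0) (n - m) + opnorm Y nu sp (pmode Y nu a 0) n))%E.
Proof.
move: HV => [HVOA _ HU].
move: HVOA => [HY3 [HY1 [_ [_ [Hcre [Hbor [[cc Hvir] [Hder [Hgd _]]]]]]]]].
move: HU => [Hsp_lin [Hsp_conj [Hsp_pos [Hvac1 [_ [_ [Hstar Hadj]]]]]]].
move: Ha => [Ha1 Ha2].
exact: (final_est HY3 HY1 Hgd Hbor Hder Hsp_lin Hsp_conj Hsp_pos Hcre Hvir Hstar Hadj Hvac1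
          Ha1 Ha2 Hd Hb).
Qed.
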